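(* Let $n\ge 2$ and let $\mathcal{P}_n$ be the set of partitions of $\{1,\dots,n\}$. The Correlation Distance $\mathrm{CD}:\mathcal{P}_n\times\mathcal{P}_n\to[0,1]$ is a metric on $\mathcal{P}_n$: for all $A,B,C\in\mathcal{P}_n$, $\mathrm{CD}(A,B)=\mathrm{CD}(B,A)$, $\mathrm{CD}(A,B)\ge 0$ with equality if and only if $A=B$, and $\mathrm{CD}(A,C)\le \mathrm{CD}(A,B)+\mathrm{CD}(B,C)$.
   Context: A clustering of $\{1,\dots,n\}$ is a partition $A=\{A_1,\dots,A_{k_A}\}$ into $k_A$ nonempty disjoint clusters. Let $N=\binom n2$. For a clustering $A$, let $\vec A\in\{0,1\}^N$ be the vector indexed by unordered pairs $\{v,w\}$ of distinct elements, whose entry is $1$ iff $v,w$ lie in the same cluster of $A$ (an intra-cluster pair), and let $m_A$ be the number of intra-cluster pairs. Let $\mathbf 1$ be the all-ones vector in $\mathbb R^N$. Define the unit vector $\vec u(A)=\frac{1}{\sqrt N}\mathbf 1$ if $k_A=1$; $\vec u(A)=\frac{\vec A-\frac{m_A}{N}\mathbf 1}{\|\vec A-\frac{m_A}{N}\mathbf 1\|}$ if $1<k_A<n$; $\vec u(A)=-\frac{1}{\sqrt N}\mathbf 1$ if $k_A=n$. The correlation coefficient is $\mathrm{CC}(A,B)=\langle \vec u(A),\vec u(B)\rangle$ (for $1<k_A,k_B<n$ this equals the Pearson correlation $\frac{N_{11}N_{00}-N_{10}N_{01}}{\sqrt{(N_{11}+N_{10})(N_{11}+N_{01})(N_{00}+N_{10})(N_{00}+N_{01})}}$,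 where $N_{11},N_{10},N_{01},N_{00}$ count pairs that are intra in both / intra in $A$ only / intra in $B$ only / intra in neither). The Correlation Distance is $\mathrm{CD}(A,B)=\frac1\pi\arccos\mathrm{CC}(A,B)$. *)

(* Defs.v *)
From Stdlib Require Import Reals.
From mathcomp Require Import all_boot.
Set Implicit Arguments.
Unset Strict Implicit.
Unset Printing Implicit Defensive.
Local Open Scope R_scope.

(* Ground set {1,...,n} is represented by 'I_n = {0,...,n-1}.
   A clustering is P : {set {set 'I_n}} with [partition P [set: 'I_n]]. *)

(* Unordered pairs {v,w}, v <> w, are indexed by ordered pairs (v,w) with v < w. *)
Definition pairs (n : nat) : {set 'I_n * 'I_n} := [set p : 'I_n * 'I_n | (val p.1 < val p.2)%N].

(* Vectors in R^N, N = C(n,2): functions on pairs (only values on [pairs n] matter). *)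
Definition pvec (n : nat) := 'I_n * 'I_n -> R.

Definition inner (n : nat) (x y : pvec n) : R :=
  \big[Rplus/R0]_(p in pairs n) (Rmult (x p) (y p)).

Definition vnorm (n : nat) (x : pvec n) : R := sqrt (inner x x).

Definition NN (n : nat) : R := INR 'C(n, 2).

Definition intra (n : nat) (A : {set {set 'I_n}}) (p : 'I_n * 'I_n) : bool :=
  [exists B in A, (p.1 \in B) && (p.2 \in B)].

Definition vecA (n : nat) (A : {set {set 'I_n}}) : pvec n :=
  fun p => if intra A p then 1 else 0.

Definition mA (n : nat) (A : {set {set 'I_n}}) : R :=
  INR #|[set p in pairs n | intra A p]|.

Definition centered (n : nat) (A : {set {set 'I_n}}) : pvec n :=
  fun p => (vecA A p - mA A / NN n).

Definition uvec (n : nat) (A : {set {set 'I_n}}) : pvec n :=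
  if #|A| == 1%N then (fun _ => / sqrt (NN n))
  else if #|A| == n then (fun _ => - / sqrt (NN n))
  else (fun p => centered A p / vnorm (centered A)).

Definition CC (n : nat) (A B : {set {set 'I_n}}) : R := inner (uvec A) (uvec B).

Definition CD (n : nat) (A B : {set {set 'I_n}}) : R := (acos (CC A B) / PI).

(* Main.v *)
Require Import Defs.
From Stdlib Require Import Reals Lra Psatz.
From mathcomp Require Import all_boot zify.
From HB Require Import structures.
Set Implicit Arguments.
Unset Strict Implicit.
Unset Printing Implicit Defensive.

Section Part.
Variable n : nat.
Implicit Types (P A B : {set {set 'I_n}}) (x y : 'I_n).

Lemma intra_pblock P x y : partition P [set: 'I_n] ->
  intra P (x, y) = (y \in pblock P x).
Proof.
case/and3P=> /eqP hc ht h0.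
have hx : x \in cover P by rewrite hc inE.
apply/existsP/idP => [[B /and3P[HB Hx Hy]] | Hy].
  by rewrite (def_pblock ht HB Hx).
exists (pblock P x); rewrite pblock_mem //= Hy andbT.
by rewrite mem_pblock.
Qed.

Lemma intra_sym P x y : intra P (x, y) = intra P (y, x).
Proof.
by apply/existsP/existsP => -[B /and3P[HB Hx Hy]]; exists B; rewrite HB Hx Hy.
Qed.

Lemma intra_refl P x : partition P [set: 'I_n] -> intra P (x, x).
Proof.
move=> hP; rewrite intra_pblock // mem_pblock.
by case/and3P: hP => /eqP -> _ _; rewrite inE.
Qed.

Lemma pair_of P x y : x != y -> exists p, p \in pairs n /\ intra P p = intra P (x, y).
Proof.
move=> hxy; case: (ltngtP (val x) (val y)) => h.
- by exists (x, y); rewrite inE /= h.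
- by exists (y, x); rewrite inE /= h intra_sym.
- by move: hxy; rewrite -(inj_eq val_inj) h eqxx.
Qed.

Lemma intra_all P Q : partition P [set: 'I_n] -> partition Q [set: 'I_n] ->
  (forall p, p \in pairs n -> intra P p = intra Q p) ->
  forall x y, intra P (x, y) = intra Q (x, y).
Proof.
move=> hP hQ H x y.
case: (ltngtP (val x) (val y)) => h.
- by apply: H; rewrite inE /= h.
- by rewrite intra_sym (intra_sym Q); apply: H; rewrite inE /= h.
- have -> : x = y by apply: val_inj.
  by rewrite !intra_refl.
Qed.

Lemma part_eq A B : partition A [set: 'I_n] -> partition B [set: 'I_n] ->
  (forall p, p \in pairs n -> intra A p = intra B p) -> A = B.
Proof.
move=> hA hB H.
have E := intra_all hA hB H.
have sub : forall P Q, partition P [set: 'I_n] -> partition Q [set: 'I_n] ->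
   (forall x y, intra P (x, y) = intra Q (x, y)) -> P \subset Q.
  move=> P Q hP hQ E'; apply/subsetP => X hX.
  have := hP; case/and3P => /eqP hc ht h0.
  have /set0Pn [x hx] : X != set0 by apply: contraNneq h0 => <-.
  have -> : X = pblock Q x.
    rewrite -(def_pblock ht hX hx); apply/setP => y.
    by rewrite -intra_pblock // -intra_pblock // E'.
  apply: pblock_mem.
  by case/and3P: hQ => /eqP -> _ _; rewrite inE.
apply/eqP; rewrite eqEsubset (sub _ _ hA hB E) (sub _ _ hB hA) //.

Qed.


Lemma part_k1 P : partition P [set: 'I_n] -> #|P| = 1%N -> forall x y, intra P (x, y).
Proof.
case/and3P=> /eqP hc _ _ /eqP /cards1P [B hB] x y.
move: hc; rewrite hB cover1 => hB'.
apply/existsP; exists B; by rewrite inE eqxx hB' !inE.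
Qed.

Lemma sum_card_split P : set0 \notin P ->
  (\sum_(A in P) #|A| = #|P| + \sum_(A in P) (#|A| - 1))%N.
Proof.
move=> h0; rewrite -sum1_card -big_split /=; apply: eq_bigr => A hA.
have : A != set0 by apply: contraNneq h0 => <-.
rewrite -card_gt0 => h; by rewrite add1n subn1 prednK.
Qed.

Lemma part_kn P : partition P [set: 'I_n] -> #|P| = n -> forall x y, x != y -> ~~ intra P (x, y).
Proof.
move=> hP hk x y hxy; apply/negP => /existsP [B /and3P [HB Hx Hy]].
have hc := card_partition hP; rewrite cardsT card_ord in hc.
have := hP; case/and3P => _ _ h0.
rewrite sum_card_split // hk in hc.
have h2 : (1 < #|B|)%N by apply/card_gt1P; exists x, y.
have : (#|B| - 1 <= \sum_(A in P) (#|A| - 1))%N.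
  rewrite (bigD1 B) //=; exact: leq_addr.
lia.
Qed.

Lemma part_notn P : partition P [set: 'I_n] -> #|P| != n ->
  exists x y, x != y /\ intra P (x, y).
Proof.
move=> hP hk.
case: (boolP [exists x, exists y, (x != y) && intra P (x, y)]).
  by case/existsP => x /existsP [y /andP [h1 h2]]; exists x, y.
move=> hno; exfalso; move/negP: hk; apply.
have hc := card_partition hP; rewrite cardsT card_ord in hc.
have := hP; case/and3P => _ _ h0.
apply/eqP; transitivity (\sum_(A in P) #|A|)%N; last by rewrite -hc.
rewrite -sum1_card; apply: eq_bigr => A hA.
have : A != set0 by apply: contraNneq h0 => <-.
rewrite -card_gt0 => h1.
have : (#|A| <= 1)%N.
  apply/card_le1_eqP => a b ha hb; apply/eqP; apply: contraR hno => hab.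
  apply/existsP; exists a; apply/existsP; exists b; rewrite eq_sym hab /=.
  by apply/existsP; exists A; rewrite hA ha hb.
by move=> h2; apply/eqP; rewrite eqn_leq h1 h2.
Qed.

Lemma part_not1 P : (2 <= n)%N -> partition P [set: 'I_n] -> #|P| != 1%N ->
  exists x y, ~~ intra P (x, y).
Proof.
move=> hn hP hk.
have := hP; case/and3P => /eqP hc ht h0.
have x0 : 'I_n by apply: (@Ordinal n 0); lia.
have hP0 : (0 < #|P|)%N.
  rewrite card_gt0; apply/set0Pn; exists (pblock P x0); apply: pblock_mem.
  by rewrite hc inE.
have /card_gt1P [B1 [B2 [h1 h2 h12]]] : (1 < #|P|)%N by lia.
have /set0Pn [x hx] : B1 != set0 by apply: contraNneq h0 => <-.
have /set0Pn [y hy] : B2 != set0 by apply: contraNneq h0 => <-.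
exists x, y; rewrite intra_pblock //.
rewrite (def_pblock ht h1 hx); apply/negP => hy1.
move/negP: h12; apply; apply/eqP.
by rewrite -(def_pblock ht h1 hy1) (def_pblock ht h2 hy).
Qed.

End Part.

Local Open Scope R_scope.

Lemma Rplus_assoc' : associative Rplus. Proof. by move=> *; rewrite Rplus_assoc. Qed.
HB.instance Definition _ := Monoid.isComLaw.Build R R0 Rplus Rplus_assoc' Rplus_comm Rplus_0_l.

Section Sums.
Variable I : finType.
Implicit Types (S : {set I}) (f g : I -> R).

Lemma sum_add S f g : \big[Rplus/R0]_(i in S) (f i + g i) =
  \big[Rplus/R0]_(i in S) f i + \big[Rplus/R0]_(i in S) g i.
Proof. exact: big_split. Qed.

Lemma sum_scal S c f : \big[Rplus/R0]_(i in S) (c * f i) = c * \big[Rplus/R0]_(i in S) f i.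
Proof.
elim/big_rec2: _ => [|i y1 y2 _ ->]; first by rewrite Rmult_0_r.
by rewrite Rmult_plus_distr_l.
Qed.

Lemma sum_ext S f g : (forall i, i \in S -> f i = g i) ->
  \big[Rplus/R0]_(i in S) f i = \big[Rplus/R0]_(i in S) g i.
Proof. by move=> H; apply: eq_bigr. Qed.

Lemma sum_nonneg S f : (forall i, i \in S -> 0 <= f i) -> 0 <= \big[Rplus/R0]_(i in S) f i.
Proof.
move=> H; elim/big_rec: _ => [|i y Hi Hy]; first by lra.
have := H i Hi; lra.
Qed.

Lemma sum_elem S f j : (forall i, i \in S -> 0 <= f i) -> j \in S ->
  f j <= \big[Rplus/R0]_(i in S) f i.
Proof.
move=> H Hj; rewrite (bigD1 j) //=.
have : 0 <= \big[Rplus/R0]_(i in S | i != j) f i.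
  elim/big_rec: _ => [|i y /andP[Hi _] Hy]; first by lra.
  have := H i Hi; lra.
lra.
Qed.

Lemma sum_const S c : \big[Rplus/R0]_(i in S) c = INR #|S| * c.
Proof.
rewrite big_const; elim: #|S| => [|k IH]; first by rewrite /=; lra.
rewrite S_INR /= IH; lra.
Qed.

End Sums.


Lemma card_pairs n : #|pairs n| = 'C(n, 2).
Proof.
set S := pairs n.
set sw := fun p : 'I_n * 'I_n => (p.2, p.1).
set S' := sw @^-1: S.
set D := [set p : 'I_n * 'I_n | p.1 == p.2].
have hS' : #|S'| = #|S| by apply: card_preimset => -[a b] [c d] [-> ->].
have hD : #|D| = n.
  have -> : D = [set (i, i) | i : 'I_n].
    apply/setP => -[a b]; rewrite !inE /=; apply/eqP/imsetP => [-> | [i _ [-> ->]]] //.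
    by exists b.
  by rewrite card_imset ?card_ord // => i j [].
have hC : ~: S = S' :|: D.
  apply/setP => -[a b]; rewrite !inE /= -leqNgt leq_eqVlt orbC.
  by rewrite -(inj_eq val_inj) eq_sym.
have hI : S' :&: D = set0.
  apply/setP => -[a b]; rewrite !inE /=.
  by apply/negP => /andP[h /eqP e]; rewrite e ltnn in h.
have := cardsC S; rewrite hC cardsU hI cards0 subn0 hS' hD card_prod card_ord.
rewrite bin2; move: #|S| => k H.
have -> : (n * n.-1 = k.*2)%N.
  case: n H {S S' D hS' hD hC hI sw} => [|m] /= H; first by rewrite muln0 in H *; lia.
  rewrite -addnn; nia.
by rewrite doubleK.
Qed.

Lemma NN_pos n : (2 <= n)%N -> 0 < NN n.
Proof.
move=> hn; rewrite /NN; apply: lt_0_INR; apply/ltP; by rewrite bin_gt0.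
Qed.

Lemma NN_card n : NN n = INR #|pairs n|.
Proof. by rewrite /NN card_pairs. Qed.


Lemma quad P M Q : 0 <= P -> 0 <= Q -> (forall t, 0 <= t*t*P + 2*t*M + Q) -> M*M <= P*Q.
Proof.
intros hP hQ H.
destruct (Rle_lt_or_eq_dec 0 P hP) as [hp|hp].
- specialize (H (- M / P)).
  assert (E : - M / P * (- M / P) * P + 2 * (- M / P) * M + Q = Q - M*M/P) by (field; lra).
  rewrite E in H.
  assert (M*M/P <= Q) by lra.
  apply Rmult_le_reg_r with (/P). apply Rinv_0_lt_compat; lra.
  replace (P * Q * / P) with Q by (field; lra). unfold Rdiv in *. lra.
- subst P. destruct (Req_dec M 0) as [->|hm]. nra.
  specialize (H (-(Q+1)/(2*M))).
  assert (E : - (Q + 1) / (2 * M) * (- (Q + 1) / (2 * M)) * 0 + 2 * (- (Q + 1) / (2 * M)) * M + Q = -1) by (field; lra).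
  lra.
Qed.

Lemma quad_sqrt P M Q : 0 <= P -> 0 <= Q -> (forall t, 0 <= t*t*P + 2*t*M + Q) ->
  - (sqrt P * sqrt Q) <= M.
Proof.
intros hP hQ H.
pose proof (quad hP hQ H) as HM.
rewrite <- sqrt_mult by lra.
assert (Rabs M <= sqrt (P*Q)).
{ rewrite <- sqrt_Rsqr_abs. apply sqrt_le_1_alt. unfold Rsqr. lra. }
pose proof (Rle_abs (-M)) as hr. rewrite Rabs_Ropp in hr. lra.
Qed.

Lemma tri_acos x y z : -1 <= x <= 1 -> -1 <= y <= 1 -> -1 <= z <= 1 ->
  x*y - sqrt (1 - x²) * sqrt (1 - y²) <= z -> acos z <= acos x + acos y.
Proof.
intros hx hy hz H.
pose proof (acos_bound x). pose proof (acos_bound y). pose proof (acos_bound z).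
destruct (Rle_lt_dec PI (acos x + acos y)) as [h|h]. lra.
apply Rnot_lt_le; intro hc.
assert (hc2 : cos (acos z) < cos (acos x + acos y)).
{ apply cos_decreasing_1; lra. }
rewrite cos_plus (cos_acos x hx) (cos_acos y hy) (cos_acos z hz) (sin_acos x hx) (sin_acos y hy) in hc2.
lra.
Qed.


Section Inner.
Variable n : nat.
Implicit Types (x y z : pvec n).

Lemma inner_sym x y : inner x y = inner y x.
Proof. by apply: sum_ext => p _; rewrite Rmult_comm. Qed.

Lemma inner_nonneg x : 0 <= inner x x.
Proof. by apply: sum_nonneg => p _; apply: Rle_0_sqr. Qed.

Lemma inner3 a b c x y z :
  inner (fun p => a * x p + b * y p + c * z p) (fun p => a * x p + b * y p + c * z p) =
  a*a*inner x x + b*b*inner y y + c*c*inner z z + 2*a*b*inner x y + 2*a*c*inner x z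
  + 2*b*c*inner y z.
Proof.
rewrite /inner.
rewrite (@sum_ext _ _ _ (fun p => a*a*(x p * x p) + b*b*(y p * y p) + c*c*(z p * z p)
   + 2*a*b*(x p * y p) + 2*a*c*(x p * z p) + 2*b*c*(y p * z p))); last by move=> p _; ring.
by rewrite !sum_add !sum_scal.
Qed.

Lemma inner3_nonneg a b c x y z :
  0 <= a*a*inner x x + b*b*inner y y + c*c*inner z z + 2*a*b*inner x y + 2*a*c*inner x z
  + 2*b*c*inner y z.
Proof. rewrite -inner3; exact: inner_nonneg. Qed.

Lemma inner_zero x : inner x x = 0 -> forall p, p \in pairs n -> x p = 0.
Proof.
move=> H p hp.
have := @sum_elem _ (pairs n) (fun p => x p * x p) p (fun i _ => Rle_0_sqr (x i)) hp.
rewrite -/(inner x x) H => h.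
have : x p * x p = 0 by have := Rle_0_sqr (x p); rewrite /Rsqr; lra.
by move/Rmult_integral => [].
Qed.

End Inner.


Section U.
Variable n : nat.
Hypothesis hn : (2 <= n)%N.
Implicit Types (A : {set {set 'I_n}}).

Lemma mid_m A : partition A [set: 'I_n] -> #|A| != 1%N -> #|A| != n ->
  0 < mA A /\ mA A < NN n.
Proof.
move=> hA h1 hk.
have [x [y [hxy hi]]] := part_notn hA hk.
have [p [hp hpi]] := pair_of A hxy.
have [x' [y' hni]] := part_not1 hn hA h1.
have hxy' : x' != y'.
  by apply: contraNneq hni => ->; rewrite intra_refl.
have [q [hq hqi]] := pair_of A hxy'.
rewrite /mA NN_card; split.
- apply: lt_0_INR; apply/ltP; rewrite card_gt0; apply/set0Pn; exists p.
  by rewrite inE hp hpi hi.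
- apply: lt_INR; apply/ltP; apply: proper_card; apply/properP; split.
    by apply/subsetP => r; rewrite inE => /andP[].
  exists q => //; rewrite inE hq hqi /=; exact: hni.
Qed.

Lemma centered_sq A p : partition A [set: 'I_n] -> #|A| != 1%N -> #|A| != n ->
  (intra A p -> 0 < centered A p) /\ (~~ intra A p -> centered A p < 0).
Proof.
move=> hA h1 hk; have [m0 mN] := mid_m hA h1 hk.
have hN := NN_pos hn.
rewrite /centered /vecA; split.
- move=> ->. have : mA A / NN n < 1.
    apply: (Rmult_lt_reg_r (NN n)) => //; rewrite /Rdiv Rmult_assoc Rinv_l; lra.
  lra.
- move/negbTE => ->. have : 0 < mA A / NN n by apply: Rdiv_lt_0_compat.
  lra.
Qed.

Lemma pairs_nonempty : exists p, p \in pairs n.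
Proof.
have h0 : (0 < n)%N by apply: leq_trans hn.
exists (Ordinal h0, Ordinal hn); by rewrite inE.
Qed.

Lemma centered_norm A : partition A [set: 'I_n] -> #|A| != 1%N -> #|A| != n ->
  0 < inner (centered A) (centered A).
Proof.
move=> hA h1 hk.
have [p hp] := pairs_nonempty.
apply: (Rlt_le_trans _ (centered A p * centered A p)).
  have [h2 h3] := centered_sq p hA h1 hk.
  case: (boolP (intra A p)) => hi; [have := h2 hi | have := h3 hi]; nra.
exact: (@sum_elem _ (pairs n) (fun p => centered A p * centered A p) p
          (fun i _ => Rle_0_sqr _) hp).
Qed.

Lemma uvec_sign A p : partition A [set: 'I_n] -> p \in pairs n ->
  (0 < uvec A p <-> intra A p).
Proof.
case: p => a b hA hp; rewrite /uvec.
have hN := NN_pos hn.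
have hs : 0 < / sqrt (NN n) by apply: Rinv_0_lt_compat; apply: sqrt_lt_R0.
case: eqP => [h1 | /eqP h1].
  by split => _ //; apply: part_k1.
case: eqP => [hk | /eqP hk].
  have hp' : a != b.
    by move: hp; rewrite inE /=; apply: contraTneq => ->; rewrite ltnn.
  move: (part_kn hA hk hp') => /negbTE ->.
  split => // h; lra.
have hv : 0 < vnorm (centered A) by apply: sqrt_lt_R0; exact: centered_norm.
have [h2 h3] := centered_sq (a, b) hA h1 hk.
split.
  move=> h; case: (boolP (intra A (a, b))) => // hi; have := h3 hi => h'.
  have : centered A (a, b) / vnorm (centered A) < 0.
    by rewrite /Rdiv; apply: Rmult_neg_pos => //; apply: Rinv_0_lt_compat.
  lra.
move=> hi; apply: Rdiv_lt_0_compat => //; exact: h2.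
Qed.

Lemma uvec_unit A : partition A [set: 'I_n] -> inner (uvec A) (uvec A) = 1.
Proof.
move=> hA; rewrite /uvec.
have hN := NN_pos hn.
have hsq : sqrt (NN n) * sqrt (NN n) = NN n by apply: sqrt_sqrt; lra.
have hs : 0 < sqrt (NN n) by apply: sqrt_lt_R0.
case: eqP => [h1 | /eqP h1].
  rewrite /inner sum_const -NN_card -{1}hsq; field; lra.
case: eqP => [hk | /eqP hk].
  rewrite /inner sum_const -NN_card -{1}hsq; field; lra.
set c := centered A.
have hc : 0 < inner c c by exact: centered_norm.
have hv : vnorm c * vnorm c = inner c c by apply: sqrt_sqrt; lra.
have hv0 : 0 < vnorm c by apply: sqrt_lt_R0.
rewrite /inner (@sum_ext _ _ _ (fun p => (/ vnorm c * / vnorm c) * (c p * c p))); last first.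
  move=> p _; rewrite /Rdiv; ring.
rewrite sum_scal -/(inner c c) -hv; field; lra.
Qed.

End U.


Theorem theorem1 (n : nat) (hn : (2 <= n)%N) :
  forall A B C : {set {set 'I_n}},
    partition A [set: 'I_n] ->
    partition B [set: 'I_n] ->
    partition C [set: 'I_n] ->
    (0 <= CD A B <= 1) /\
    CD A B = CD B A /\
    (CD A B = 0 <-> A = B) /\
    CD A C <= CD A B + CD B C.
Proof.
move=> A B C hA hB hC.
have uA := uvec_unit hn hA; have uB := uvec_unit hn hB; have uC := uvec_unit hn hC.
have hPI := PI_RGT_0.
have bnd : forall X Y : {set {set 'I_n}}, inner (uvec X) (uvec X) = 1 -> inner (uvec Y) (uvec Y) = 1 ->
    -1 <= CC X Y <= 1.
  move=> X Y h1 h2; rewrite /CC.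
  have := inner3_nonneg 1 (-1) 0 (uvec X) (uvec Y) (uvec Y).
  have := inner3_nonneg 1 1 0 (uvec X) (uvec Y) (uvec Y).
  rewrite h1 h2; lra.
have bAB := bnd _ _ uA uB; have bBC := bnd _ _ uB uC; have bAC := bnd _ _ uA uC.
split.
  have := acos_bound (CC A B); rewrite /CD; split.
    apply: Rmult_le_pos; [lra | left; apply: Rinv_0_lt_compat; lra].
  apply: (Rmult_le_reg_r PI) => //; rewrite /Rdiv Rmult_assoc Rinv_l; lra.
split.
  by rewrite /CD /CC inner_sym.
split.
  split => [h | ->]; last by rewrite /CD /CC ?uA ?uB acos_1; lra.
  have h0 : acos (CC A B) = 0.
    move: h; rewrite /CD => h.
    have := Rmult_eq_compat_r PI _ _ h; rewrite /Rdiv Rmult_assoc Rinv_l; lra.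
  have h1 : CC A B = 1 by rewrite -(cos_acos (CC A B)) // h0 cos_0.
  have hz := inner3 1 (-1) 0 (uvec A) (uvec B) (uvec B).
  rewrite uA uB -/(CC A B) h1 in hz.
  have hz' := inner_zero (x := fun p => 1 * uvec A p + -1 * uvec B p + 0 * uvec B p).
  apply: (part_eq hA hB) => p hp.
  have e : uvec A p = uvec B p.
    have := hz' ltac:(rewrite hz; ring) p hp; lra.
  apply/idP/idP => hi.
    by apply/(uvec_sign hn hB hp); rewrite -e; apply/(uvec_sign hn hA hp).
  by apply/(uvec_sign hn hA hp); rewrite e; apply/(uvec_sign hn hB hp).
have key : CC A B * CC B C - sqrt (1 - (CC A B)²) * sqrt (1 - (CC B C)²) <= CC A C.
  have hx : 0 <= 1 - CC A B * CC A B by case: bAB => ? ?; nra.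
  have hy : 0 <= 1 - CC B C * CC B C by case: bBC => ? ?; nra.
  have hq := @quad_sqrt _ (CC A C - CC A B * CC B C) _ hx hy.
  rewrite /Rsqr; suff : - (sqrt (1 - CC A B * CC A B) * sqrt (1 - CC B C * CC B C))
     <= CC A C - CC A B * CC B C by lra.
  apply: hq => t.
  have := inner3_nonneg t (-(t*CC A B+CC B C)) 1 (uvec A) (uvec B) (uvec C).
  rewrite uA uB uC -/(CC A B) -/(CC A C) -/(CC B C).
  nra.
have := tri_acos bAB bBC bAC key.
rewrite /CD => h.
rewrite /Rdiv -Rmult_plus_distr_r; apply: Rmult_le_compat_r => //.
by left; apply: Rinv_0_lt_compat.
Qed.
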